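(* Let $\mathbf{Sets}_{+1}$ be the category whose objects are sets and whose morphisms $X\to Y$ are functions $f\colon X\to Y+1$ (i.e. partial functions), with composition $g\odot f=[g,\kappa_2]\circ f$. Define $\square\colon \mathbf{Sets}_{+1}\to\mathbf{PoSets}^{\mathrm{op}}$ by $\square(X)=\mathcal{P}(X)$ ordered by inclusion, and for $f\colon X\to Y+1$ and $Q\subseteq Y$, $\square(f)(Q)=f^{-1}(Q\cup\{*\})=\{x\in X \mid \forall y\in Y.\ f(x)=y\Rightarrow y\in Q\}$. Then the forgetful functor $U\colon\int\square\to\mathbf{Sets}_{+1}$ has a left adjoint $0$ with $0(X)=(X,\emptyset)$ and a right adjoint $1$ with $1(X)=(X,X)$; moreover there is a functor (comprehension) $\int\square\to\mathbf{Sets}_{+1}$ with $(X,P)\mapsto P$ which is right adjoint to $1$, and a functor (quotient) $\int\square\to\mathbf{Sets}_{+1}$ with $(X,P)\mapsto \neg P=X\setminus P$ which is left adjoint to $0$. Thus there is a chain of adjunctions $\mathrm{Quotient}\dashv 0\dashv U\dashv 1\dashv \mathrm{Comprehension}$.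
   Context: Here $Y+1=Y\sqcup\{*\}$ is disjoint union with a singleton, $\kappa_2\colon 1\to Y+1$ the coprojection. For a functor $F\colon\mathcal{B}\to\mathbf{PoSets}^{\mathrm{op}}$, $\int F$ is the category with objects $(X,P)$, $P\in F(X)$, and morphisms $f\colon(X,P)\to(Y,Q)$ the morphisms $f\colon X\to Y$ of $\mathcal{B}$ with $P\le F(f)(Q)$; the forgetful functor sends $(X,P)\mapsto X$, $f\mapsto f$; $0$ and $1$ act as identity on morphisms. *)

(* Defs.v *)
(* Minimal category-theoretic data, with the laws stated as
   separate predicates so that the theorem can assert them. *)
From Stdlib Require Import ClassicalEpsilon.

Set Implicit Arguments.
Unset Strict Implicit.

Record CatData := {
  Ob : Type;
  Hom : Ob -> Ob -> Type;
  idm : forall a, Hom a a;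
  comp : forall a b c, Hom b c -> Hom a b -> Hom a c
}.
Arguments Hom : clear implicits.
Arguments idm {_} _.
Arguments comp {_ _ _ _} _ _.

Record FunctorData (C D : CatData) := {
  Fob : Ob C -> Ob D;
  Fhom : forall a b, Hom C a b -> Hom D (Fob a) (Fob b)
}.
Arguments Fob {C D} f _.
Arguments Fhom {C D} f {a b} _.

Definition is_functor (C D : CatData) (F : FunctorData C D) : Prop :=
  (forall a, Fhom F (idm a) = idm (Fob F a)) /\
  (forall a b c (g : Hom C b c) (f : Hom C a b),
      Fhom F (comp g f) = comp (Fhom F g) (Fhom F f)).

Definition adjoint (C D : CatData) (F : FunctorData C D) (G : FunctorData D C)
  : Prop :=
  exists (phi : forall c d, Hom D (Fob F c) d -> Hom C c (Fob G d))
         (psi : forall c d, Hom C c (Fob G d) -> Hom D (Fob F c) d),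
    (forall c d f, psi c d (phi c d f) = f) /\
    (forall c d g, phi c d (psi c d g) = g) /\
    (forall c c' d d' (h : Hom C c' c) (k : Hom D d d') (f : Hom D (Fob F c) d),
        phi c' d' (comp k (comp f (Fhom F h)))
        = comp (Fhom G k) (comp (phi c d f) h)).

(* Y+1 is option Y, with None playing the role of the point *. *)
Definition pcomp (X Y Z : Type) (g : Y -> option Z) (f : X -> option Y)
  : X -> option Z :=
  fun x => match f x with Some y => g y | None => None end.

Definition SetsP1 : CatData := {|
  Ob := Type;
  Hom := fun X Y => X -> option Y;
  idm := fun X => @Some X;
  comp := fun X Y Z g f => pcomp g f
|}.

Definition box (X Y : Type) (f : X -> option Y) (Q : Y -> Prop) : X -> Prop :=
  fun x => forall y, f x = Some y -> Q y.

Definition IntOb := {X : Type & X -> Prop}.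
Definition IntHom (A B : IntOb) :=
  {f : projT1 A -> option (projT1 B) |
    forall x, projT2 A x -> box f (projT2 B) x}.

Definition int_id (A : IntOb) : IntHom A A.
Proof.
  exists (@Some (projT1 A)). intros x Hx y E. injection E as <-. exact Hx.
Defined.

Definition int_comp (A B C : IntOb) (g : IntHom B C) (f : IntHom A B)
  : IntHom A C.
Proof.
  exists (pcomp (proj1_sig g) (proj1_sig f)).
  intros x Hx z. unfold pcomp.
  destruct (proj1_sig f x) as [y|] eqn:Ey; [|discriminate].
  intro Ez. exact (proj2_sig g y (proj2_sig f x Hx y Ey) z Ez).
Defined.

Definition IntBox : CatData := {|
  Ob := IntOb;
  Hom := IntHom;
  idm := int_id;
  comp := int_comp
|}.

Definition U : FunctorData IntBox SetsP1 :=
  @Build_FunctorData IntBox SetsP1 (fun A : IntOb => projT1 A)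
    (fun A B (f : IntHom A B) => proj1_sig f).

Definition zero_hom (X Y : Type) (f : X -> option Y)
  : IntHom (existT _ X (fun _ => False)) (existT _ Y (fun _ => False)).
Proof. exists f. intros x []. Defined.

Definition Zero : FunctorData SetsP1 IntBox :=
  @Build_FunctorData SetsP1 IntBox
    (fun X : Type => existT (fun T : Type => T -> Prop) X (fun _ => False))
    (fun X Y f => @zero_hom X Y f).

Definition one_hom (X Y : Type) (f : X -> option Y)
  : IntHom (existT _ X (fun _ => True)) (existT _ Y (fun _ => True)).
Proof. exists f. intros x _ y _. exact I. Defined.

Definition One : FunctorData SetsP1 IntBox :=
  @Build_FunctorData SetsP1 IntBox
    (fun X : Type => existT (fun T : Type => T -> Prop) X (fun _ => True))
    (fun X Y f => @one_hom X Y f).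

Definition compr_hom (A B : IntOb) (f : IntHom A B)
  : {x | projT2 A x} -> option {y | projT2 B y} :=
  fun xp =>
    match xp with
    | exist _ x px =>
        (match proj1_sig f x as o return proj1_sig f x = o -> option {y | projT2 B y} with
         | Some y => fun e => Some (exist _ y (proj2_sig f x px y e))
         | None => fun _ => None
         end) eq_refl
    end.

Definition Comprehension : FunctorData IntBox SetsP1 :=
  @Build_FunctorData IntBox SetsP1 (fun A : IntOb => {x | projT2 A x})
    (fun A B f => @compr_hom A B f).

Definition quot_hom (A B : IntOb) (f : IntHom A B)
  : {x | ~ projT2 A x} -> option {y | ~ projT2 B y} :=
  fun xp =>
    match proj1_sig f (proj1_sig xp) with
    | Some y =>
        match excluded_middle_informative (projT2 B y) with
        | left _ => None
        | right n => Some (exist _ y n)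
        end
    | None => None
    end.

Definition Quotient : FunctorData IntBox SetsP1 :=
  @Build_FunctorData IntBox SetsP1 (fun A : IntOb => {x | ~ projT2 A x})
    (fun A B f => @quot_hom A B f).

(* Main.v *)
Require Import Defs.
From Stdlib Require Import ClassicalEpsilon FunctionalExtensionality ProofIrrelevance.

Lemma int_eq (A B : IntOb) (f g : IntHom A B) : proj1_sig f = proj1_sig g -> f = g.
Proof. destruct f as [f Hf], g as [g Hg]; simpl; intros ->; f_equal; apply proof_irrelevance. Qed.

Lemma sig_opt_eq (T : Type) (P : T -> Prop) (a b : option {x | P x}) :
  option_map (@proj1_sig _ _) a = option_map (@proj1_sig _ _) b -> a = b.
Proof.
  destruct a as [[x px]|], b as [[y py]|]; simpl; intro H; try discriminate; auto.
  injection H as ->. f_equal. f_equal. apply proof_irrelevance.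
Qed.

Lemma compr_spec (A B : IntOb) (f : IntHom A B) xp :
  option_map (@proj1_sig _ _) (compr_hom f xp) = proj1_sig f (proj1_sig xp).
Proof.
  destruct xp as [x px]. destruct f as [f Hf]. unfold compr_hom; simpl.
  assert (K : forall o (e : f x = o),
    option_map (@proj1_sig _ _)
      (match o as o1 return f x = o1 -> option {y | projT2 B y} with
       | Some y => fun e => Some (exist _ y (Hf x px y e))
       | None => fun _ => None end e) = o) by (intros [] e; reflexivity).
  apply K.
Qed.

Lemma quot_spec (A B : IntOb) (f : IntHom A B) xp :
  option_map (@proj1_sig _ _) (quot_hom f xp) =
  match proj1_sig f (proj1_sig xp) with
  | Some y => if excluded_middle_informative (projT2 B y) then None else Some y
  | None => None end.
Proof.
  unfold quot_hom. destruct (proj1_sig f (proj1_sig xp)); [|reflexivity].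
  destruct excluded_middle_informative; reflexivity.
Qed.

Arguments compr_spec {A B} f xp.

Lemma pcomp_compr (B C : IntOb) (k : IntHom B C) (u : option {y | projT2 B y}) :
  option_map (@proj1_sig _ _) (match u with Some y => compr_hom k y | None => None end)
  = match option_map (@proj1_sig _ _) u with Some y => proj1_sig k y | None => None end.
Proof. destruct u as [yp|]; [apply compr_spec|reflexivity]. Qed.
Arguments quot_spec {A B} f xp.

Theorem proposition3p2 :
  is_functor U /\ is_functor Zero /\ is_functor One /\
  is_functor Comprehension /\ is_functor Quotient /\
  adjoint Quotient Zero /\ adjoint Zero U /\ adjoint U One /\
  adjoint One Comprehension.
Proof.
  split; [split; reflexivity|].
  split; [split; intros; apply int_eq; reflexivity|].
  split; [split; intros; apply int_eq; reflexivity|].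
  split.
  { split.
    - intro a. apply functional_extensionality. intro xp. apply sig_opt_eq.
      rewrite compr_spec. reflexivity.
    - intros a b c g f. apply functional_extensionality. intro xp. apply sig_opt_eq.
      rewrite compr_spec. simpl. unfold pcomp.
      pose proof (compr_spec f xp) as H.
      destruct (compr_hom f xp) as [[y py]|]; simpl in H; rewrite <- H; simpl;
        [exact (eq_sym (compr_spec g (exist _ y py)))|reflexivity]. }
  split.
  { split.
    - intro a. apply functional_extensionality. intro xp. apply sig_opt_eq.
      rewrite quot_spec. simpl. destruct xp as [x n]; simpl.
      destruct excluded_middle_informative; [contradiction|reflexivity].
    - intros a b c g f. apply functional_extensionality. intro xp. apply sig_opt_eq.
      rewrite quot_spec. simpl. unfold pcomp.
      pose proof (quot_spec f xp) as H.
      destruct xp as [x n]; simpl in *.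
      destruct (proj1_sig f x) as [y|] eqn:Ef.
      + destruct (excluded_middle_informative (projT2 b y)) as [pb|nb].
        * destruct (quot_hom f (exist _ x n)) as [[z pz]|]; simpl in H; try discriminate.
          simpl. destruct (proj1_sig g y) as [z|] eqn:Eg; [|reflexivity].
          destruct excluded_middle_informative as [|nc]; [reflexivity|].
          exfalso; apply nc. exact (proj2_sig g y pb z Eg).
        * destruct (quot_hom f (exist _ x n)) as [[z pz]|]; simpl in H; try discriminate.
          injection H as ->. rewrite quot_spec. reflexivity.
      + destruct (quot_hom f (exist _ x n)) as [[z pz]|]; simpl in H; try discriminate.
        reflexivity. }
  split.
  {
    unshelve eexists.
    { intros c d h. simpl in *. exists (fun x => match excluded_middle_informative (projT2 c x) with
          | left _ => None | right nx => h (exist _ x nx) end).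
      intros x px y. destruct excluded_middle_informative; [discriminate|contradiction]. }
    unshelve eexists.
    { intros c d g. simpl in *. exact (fun xp => proj1_sig g (proj1_sig xp)). }
    split; [|split].
    - intros c d h. simpl. apply functional_extensionality. intros [x n]. simpl.
      destruct excluded_middle_informative; [contradiction|].
      f_equal. f_equal. apply proof_irrelevance.
    - intros c d g. apply int_eq. simpl. apply functional_extensionality. intro x.
      destruct excluded_middle_informative as [p|]; [|reflexivity].
      destruct g as [g Hg]; simpl in *. destruct (g x) as [y|] eqn:E; [|reflexivity].
      destruct (Hg x p y E).
    - intros c c' d d' h k f. apply int_eq. simpl. apply functional_extensionality. intro x.
      unfold pcomp. destruct (excluded_middle_informative (projT2 c' x)) as [p|n].
      + destruct h as [h Hh]; simpl. destruct (h x) as [y|] eqn:E; [|reflexivity].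
        destruct excluded_middle_informative as [|n']; [reflexivity|].
        exfalso; exact (n' (Hh x p y E)).
      + pose proof (quot_spec h (exist _ x n)) as H. simpl in H.
        destruct (quot_hom h (exist _ x n)) as [[y ny]|]; simpl in H.
        * destruct (proj1_sig h x) as [y'|]; [|discriminate].
          destruct excluded_middle_informative as [|n0]; [discriminate|].
          injection H as E. subst y'. rewrite (proof_irrelevance _ ny n0). reflexivity.
        * destruct (proj1_sig h x) as [y'|]; [|reflexivity].
          destruct excluded_middle_informative; [reflexivity|discriminate]. }
  split.
  {
    exists (fun c d f => proj1_sig f).
    exists (fun c d g => exist _ g (fun x (f : False) => match f with end)).
    split; [|split].
    - intros. apply int_eq. reflexivity.
    - reflexivity.
    - reflexivity. }
  split.
  {
    exists (fun c d f => exist _ f (fun x _ y _ => I) : IntHom c (existT _ d (fun _ => True))).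
    exists (fun c d g => proj1_sig g).
    split; [|split].
    - reflexivity.
    - intros. apply int_eq. reflexivity.
    - intros. apply int_eq. reflexivity. }
  {
    unshelve eexists.
    { intros c d f. simpl in *. exact (fun x => compr_hom f (exist _ x I)). }
    unshelve eexists.
    { intros c d g. simpl in *. exists (fun x => option_map (@proj1_sig _ _) (g x)).
      intros x _ y E. destruct (g x) as [[z pz]|]; simpl in E; [|discriminate].
      injection E as <-. exact pz. }
    split; [|split].
    - intros c d f. apply int_eq. simpl. apply functional_extensionality. intro x.
      apply (compr_spec f (exist _ x I)).
    - intros c d g. apply functional_extensionality. intro x.
      apply sig_opt_eq. exact (@compr_spec (existT (fun T : Type => T -> Prop) c (fun _ => True)) d _ (exist _ x I)).
    - intros c c' d d' h k f. apply functional_extensionality. intro x.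
      apply sig_opt_eq. rewrite compr_spec.
      cbn [pcomp comp Fhom Fob SetsP1 IntBox int_comp One one_hom proj1_sig Comprehension].
      unfold pcomp. destruct (h x) as [y|]; [|reflexivity].
      rewrite pcomp_compr, compr_spec. reflexivity. }
Qed.
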